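(* Let $\Gamma\in\mathcal S$ with embedding $\varphi$ into $\mathbb Z^n$. If some vertex $v$ satisfies $\varphi(v)=-2E_{i_v}-\sum_{j\in J_v}E_j$ (with $i_v\notin J_v$), then every other vertex $w\ne v$ satisfies $\varphi(w)=E_{i_w}-\sum_{j\in J_w}E_j$ for some index $i_w\notin J_w$.
   Context: A plumbing tree is a finite tree $\Gamma$ each of whose vertices $v$ carries an integer decoration $d(v)$. $\Gamma$ is minimal if no vertex has decoration $-1$. For $n\ge 1$ let $(\mathbb Z^n,Q_n)$ be the lattice with basis $E_1,\dots,E_n$ and $Q_n(E_i,E_j)=-\delta_{ij}$, and let $K=\sum_{i=1}^n E_i$. A plumbing tree $\Gamma$ on $n$ vertices is a symplectic plumbing tree if there is a map $\varphi$ (an embedding) from its vertex set to $\mathbb Z^n$ such that: for distinct vertices $v_1,v_2$, $Q_n(\varphi(v_1),\varphi(v_2))$ is $1$ if they are adjacent and $0$ otherwise; $Q_n(\varphi(v),\varphi(v))=d(v)$ for every $v$; and $Q_n(\varphi(v),K)+Q_n(\varphi(v),\varphi(v))=-2$ for every $v$. $\mathcal S$ is the set of minimal, connected symplectic plumbing trees. *)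

(* Defs.v *)
From HB Require Import structures.
From mathcomp Require Import all_boot all_order all_algebra.
Set Implicit Arguments. Unset Strict Implicit. Unset Printing Implicit Defensive.
Import Order.TTheory GRing.Theory Num.Theory.
Local Open Scope ring_scope.

Notation vecZ n := {ffun 'I_n -> int}.

Definition basisE (n : nat) (i : 'I_n) : vecZ n := [ffun k => (k == i)%:R].

(* Q_n(x, y) = - sum_k x_k y_k, so that Q_n(E_i, E_j) = - delta_ij *)
Definition Qn (n : nat) (x y : vecZ n) : int := - \sum_(k < n) x k * y k.

Definition Kvec (n : nat) : vecZ n := \sum_(i < n) basisE i.

(* A plumbing graph on vertex set 'I_n: adjacency relation [adj] and
   decorations [d]. *)
Definition simple_graph (n : nat) (adj : rel 'I_n) : Prop :=
  irreflexive adj /\ symmetric adj.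

Definition num_edges (n : nat) (adj : rel 'I_n) : nat :=
  #|[set p : 'I_n * 'I_n | adj p.1 p.2 && (p.1 < p.2)%N]|.

Definition is_tree (n : nat) (adj : rel 'I_n) : Prop :=
  (0 < n)%N /\ simple_graph adj /\ (forall u v, connect adj u v) /\
  num_edges adj = n.-1.

Definition minimal_dec (n : nat) (d : 'I_n -> int) : Prop :=
  forall v, d v != -1.

Definition is_embedding (n : nat) (adj : rel 'I_n) (d : 'I_n -> int)
    (phi : 'I_n -> vecZ n) : Prop :=
  (forall v1 v2, v1 != v2 ->
      Qn (phi v1) (phi v2) = (if adj v1 v2 then 1 else 0)) /\
  (forall v, Qn (phi v) (phi v) = d v) /\
  (forall v, Qn (phi v) (Kvec n) + Qn (phi v) (phi v) = -2).

(* Membership in S (minimal connected symplectic plumbing tree),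
   witnessed by the given embedding phi. *)
Definition in_S_with (n : nat) (adj : rel 'I_n) (d : 'I_n -> int)
    (phi : 'I_n -> vecZ n) : Prop :=
  is_tree adj /\ minimal_dec d /\ is_embedding adj d phi.

(* Main.v *)
Require Import Defs.
From HB Require Import structures.
From mathcomp Require Import all_boot all_order all_algebra.
From mathcomp Require Import zify ring lra.
From Stdlib Require Import Classical.
Import Order.TTheory GRing.Theory Num.Theory.
Local Open Scope ring_scope.

Module Alg.
Set Implicit Arguments. Unset Strict Implicit. Unset Printing Implicit Defensive.
Section Alg.
Variable n : nat.
Implicit Types x y z : vecZ n.

Definition Tf x : int := \sum_(c < n) x c * (x c + 1).

Lemma QnDl x y z : Qn (x + y) z = Qn x z + Qn y z.
Proof.
rewrite /Qn -opprD -big_split /=; congr (- _); apply: eq_bigr => c _.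
by rewrite ffunE mulrDl.
Qed.

Lemma QnC x y : Qn x y = Qn y x.
Proof. by rewrite /Qn; congr (- _); apply: eq_bigr => c _; rewrite mulrC. Qed.

Lemma QnDr x y z : Qn z (x + y) = Qn z x + Qn z y.
Proof. by rewrite QnC QnDl !(QnC z). Qed.

Lemma Qn_suml (l : nat) (F : 'I_l -> vecZ n) z :
  Qn (\sum_(j < l) F j) z = \sum_(j < l) Qn (F j) z.
Proof.
elim: l F => [|l IH] F.
  by rewrite !big_ord0 /Qn big1 ?oppr0 // => c _; rewrite ffunE mul0r.
by rewrite !big_ord_recr /= QnDl IH.
Qed.

Lemma Kvec_E c : Kvec n c = 1.
Proof.
rewrite /Kvec sum_ffunE (bigD1 c) //= big1 ?addr0; first by rewrite ffunE eqxx.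
by move=> j Hj; rewrite ffunE eq_sym (negbTE Hj).
Qed.

Lemma GT x : Qn x x + Qn x (Kvec n) = - Tf x.
Proof.
rewrite /Qn /Tf -opprD -big_split /=; congr (- _); apply: eq_bigr => c _.
by rewrite Kvec_E mulrDr mulr1.
Qed.

Lemma term_ge0 (a : int) : 0 <= a * (a + 1).
Proof. nia. Qed.

Lemma Tf_term x c : x c * (x c + 1) + \sum_(e < n | e != c) x e * (x e + 1) = Tf x.
Proof. by rewrite /Tf [RHS](bigD1 c). Qed.

Lemma Tf_rest_ge0 x c : 0 <= \sum_(e < n | e != c) x e * (x e + 1).
Proof. by apply: sumr_ge0 => e _; apply: term_ge0. Qed.

Lemma Tf_term_le x c : x c * (x c + 1) <= Tf x.
Proof. rewrite -(Tf_term x c); have := Tf_rest_ge0 x c; lia. Qed.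

Lemma shape_other x i c : Tf x = 2 -> x i = -2 -> c != i -> x c = 0 \/ x c = -1.
Proof.
move=> HT Hi Hc.
have H := Tf_term x i; rewrite Hi HT in H.
have H0 : \sum_(e < n | e != i) x e * (x e + 1) = 0 by lia.
have /psumr_eq0P H1 := H0.
have := H1 (fun e _ => term_ge0 (x e)) c Hc.
nia.
Qed.

Lemma coord01 u v i : Tf u = 2 -> Tf v = 2 -> v i = -2 -> 0 <= Qn u v ->
  u i = 0 \/ u i = 1.
Proof.
move=> Hu Hv Hi HQ.
have E : \sum_(c < n) (2 * (u c * v c) + u c * (u c + 1)) = - 2 * Qn u v + 2.
  rewrite big_split /= -Hu /Qn -mulr_sumr; ring.
rewrite (bigD1 i) //= Hi in E.
have R : 0 <= \sum_(c < n | c != i) (2 * (u c * v c) + u c * (u c + 1)).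
  apply: sumr_ge0 => c Hc.
  have [->|->] := shape_other Hv Hi Hc; nia.
have Tl := Tf_term_le u i.
rewrite Hu in Tl.
move: E R Tl; set a := u i; set r := \sum_(c < n | c != i) _ => E R Tl.
have H1 : -2 <= a <= 1 by nia.
have : a = -2 \/ a = -1 \/ a = 0 \/ a = 1 by lia.
case=> [Ea|[Ea|[Ea|Ea]]]; rewrite Ea in E; try lia.
Qed.

Lemma shape_other2 x i c : Tf x = 2 -> x i * (x i + 1) = 2 -> c != i -> x c = 0 \/ x c = -1.
Proof.
move=> HT Hi Hc.
have H := Tf_term x i; rewrite Hi HT in H.
have H0 : \sum_(e < n | e != i) x e * (x e + 1) = 0 by lia.
have /psumr_eq0P H1 := H0.
have := H1 (fun e _ => term_ge0 (x e)) c Hc.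
nia.
Qed.

Lemma Tf_two x i k : i != k -> x i * (x i + 1) + x k * (x k + 1) <= Tf x.
Proof.
move=> Hik; rewrite -(Tf_term x i) lerD2l (bigD1 k) /=; last by rewrite eq_sym.
rewrite lerDl; by apply: sumr_ge0 => e _; apply: term_ge0.
Qed.

Lemma Tf_add x y : Tf (x + y) = Tf x + Tf y - 2 * Qn x y.
Proof.
have h1 := GT (x + y); have h2 := GT x; have h3 := GT y.
rewrite !QnDl !QnDr (QnC y x) in h1.
lia.
Qed.

Lemma sum_basis_in (J : {set 'I_n}) c : (\sum_(j in J) basisE j) c = (c \in J)%:R.
Proof.
rewrite sum_ffunE; case: (boolP (c \in J)) => Hc.
  rewrite (bigD1 c) //= big1 ?addr0; first by rewrite ffunE eqxx.
  by move=> j /andP[_ Hj]; rewrite ffunE eq_sym (negbTE Hj).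
rewrite big1 // => j Hj; rewrite ffunE; case: eqP => // E.
by rewrite E Hj in Hc.
Qed.
End Alg.
End Alg.
Module Wk.
Set Implicit Arguments. Unset Strict Implicit. Unset Printing Implicit Defensive.
Local Open Scope nat_scope.
Section Walk.
Variables (T : finType) (adj : rel T) (X Y : pred T).
Hypothesis adj_irr : irreflexive adj.

Definition walk (f : nat -> T) m :=
  X (f 0) /\ Y (f m) /\ (forall j, j < m -> adj (f j) (f j.+1)).

Definition good (f : nat -> T) m :=
  walk f m /\
  (forall j, 0 < j <= m -> ~~ X (f j)) /\ (forall j, j < m -> ~~ Y (f j)) /\
  (forall j l, j.+1 < l <= m -> f j != f l /\ ~~ adj (f j) (f l)).

Lemma walk_good m f : walk f m -> exists m' f', good f' m'.
Proof.
elim/ltn_ind: m f => m IH f [HX [HY Ha]].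
destruct (classic (exists j, 0 < j <= m /\ X (f j))) as [[j [Hj HXj]]|Nb].
  apply: (IH (m - j) _ (fun t => f (t + j))); first lia.
  split; [by [] | split].
    by have -> : m - j + j = m by lia.
  move=> t Ht; rewrite addSn; apply: Ha; lia.
destruct (classic (exists j, j < m /\ Y (f j))) as [[j [Hj HYj]]|Nc].
  apply: (IH j Hj f); split; [by []|split; [by []|]].
  move=> t Ht; apply: Ha; lia.
destruct (classic (exists j l, j.+1 < l <= m /\ (f j = f l \/ adj (f j) (f l))))
  as [[j [l [Hjl [Heq|Hadj]]]]|Ne].
- apply: (IH (m - (l - j)) _ (fun t => if t <= j then f t else f (t + (l - j)))).
    lia.
  split; [by []|split].
    case: ifP => H.
      have -> : m - (l - j) = j by lia.
      by rewrite Heq; have -> : l = m by lia.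
    by have -> : m - (l - j) + (l - j) = m by lia.
  move=> t Ht /=; case: (ltngtP t j) => Htj.
  + apply: Ha; lia.
  +     have -> : t.+1 + (l - j) = (t + (l - j)).+1 by lia.
    apply: Ha; lia.
  + subst t; rewrite Heq.
    have -> : j.+1 + (l - j) = l.+1 by lia.
    apply: Ha; lia.
- apply: (IH (m - (l - j).-1) _ (fun t => if t <= j then f t else f (t + (l - j).-1))).
    lia.
  split; [by []|split].
    case: ifP => H; first lia.
    by have -> : m - (l - j).-1 + (l - j).-1 = m by lia.
  move=> t Ht /=; case: (ltngtP t j) => Htj.
  + apply: Ha; lia.
  +     have -> : t.+1 + (l - j).-1 = (t + (l - j).-1).+1 by lia.
    apply: Ha; lia.
  + subst t.
    have -> : j.+1 + (l - j).-1 = l by lia.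
    by [].
- exists m, f; split; first by [].
  split; [|split].
  + move=> j Hj; apply/negP => HXj; apply: Nb; exists j; by [].
  + move=> j Hj; apply/negP => HYj; apply: Nc; exists j; by [].
  + move=> j l Hjl; split.
      apply/eqP => E; apply: Ne; exists j, l; by auto.
    apply/negP => E; apply: Ne; exists j, l; by auto.
Qed.
End Walk.
End Wk.
Import Alg Wk.

Theorem proposition3p4 (n : nat) (adj : rel 'I_n) (d : 'I_n -> int)
    (phi : 'I_n -> vecZ n) :
  in_S_with adj d phi ->
  forall v : 'I_n,
    (exists (i : 'I_n) (J : {set 'I_n}), i \notin J /\
       phi v = - (basisE i *+ 2) - \sum_(j in J) basisE j) ->
    forall w : 'I_n, w != v ->
      exists (i : 'I_n) (J : {set 'I_n}), i \notin J /\
        phi w = basisE i - \sum_(j in J) basisE j.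
Proof.
move=> [[Hn [[Hirr Hsym] [Hconn Hedges]]] [Hmin [Hoff [Hdiag HK]]]].
move=> v [i [J [HiJ Hv]]] w Hwv.
have HT : forall u, Tf (phi u) = 2.
  by move=> u; have := HK u; rewrite addrC GT; lia.
have Hvi : phi v i = -2.
  by rewrite Hv !ffunE sum_basis_in (negbTE HiJ) eqxx.
have Hoff0 : forall u u', u != u' -> 0 <= Qn (phi u) (phi u').
  by move=> u u' H; rewrite Hoff //; case: (adj u u').
case: (pickP (fun k => phi w k == -2)) => [k /eqP Hwk|Hno].
  exfalso.
  have Hi01 : forall u, u != v -> phi u i = 0 \/ phi u i = 1.
    by move=> u Hu; apply: (coord01 (HT u) (HT v) Hvi); apply: Hoff0.
  have Hk01 : forall u, u != w -> phi u k = 0 \/ phi u k = 1.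
    by move=> u Hu; apply: (coord01 (HT u) (HT w) Hwk); apply: Hoff0.
  have Hik : i != k.
    apply/eqP => E; subst k; have := Hi01 w Hwv; rewrite Hwk; lia.
  pose X := [pred u | (u == v) || (phi u i == 1)].
  pose Y := [pred u | (u == w) || (phi u k == 1)].
  have [p Hp Hlast] := connectP (Hconn v w).
  have Hwalk : walk adj X Y (fun t => nth v (v :: p) t) (size p).
    split; first by rewrite /= eqxx.
    split.
      rewrite /= -[X in nth v _ X]/((size (v :: p)).-1) nth_last /= -Hlast.
      by rewrite eqxx.
    move=> j Hj; move/pathP: Hp => /(_ v j Hj) //.
  have [m [f [[HX [HY Ha]] [Nb [Nc Nchord]]]]] := walk_good Hwalk.
  have HG : forall l, (l <= m)%N -> Tf (\sum_(j < l.+1) phi (f j)) = 2.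
    elim=> [|l IH] Hl.
      by rewrite big_ord1 HT.
    rewrite big_ord_recr /= Tf_add IH ?(ltnW Hl) // HT.
    have Hadj := Ha l Hl.
    have Hne : f l != f l.+1.
      by apply/eqP => E; rewrite E Hirr in Hadj.
    rewrite Qn_suml big_ord_recr /= Hoff // Hadj big1 ?add0r; first by [].
    move=> j _; have [Hne2 Hna] : f j != f l.+1 /\ ~~ adj (f j) (f l.+1) by apply: Nchord; rewrite ltnS ltn_ord Hl.
    by rewrite Hoff // (negbTE Hna).
  have := HG m (leqnn m).
  set s := \sum_(j < m.+1) phi (f j) => Hs.
  have Hsi : s i = -2 \/ s i = 1.
    rewrite /s sum_ffunE big_ord_recl big1 ?addr0.
      move: HX; rewrite /= => /orP[/eqP ->|/eqP ->]; by [left|right].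
    move=> j _; rewrite /bump /=.
    have Hj : (0 < j.+1 <= m)%N by rewrite /= ltn_ord.
    have := Nb _ Hj; rewrite /= negb_or => /andP[H1 H2].
    by case: (Hi01 _ H1) => // E; rewrite E eqxx in H2.
  have Hsk : s k = -2 \/ s k = 1.
    rewrite /s sum_ffunE big_ord_recr big1 ?add0r.
      move: HY; rewrite /= add0r => /orP[/eqP ->|/eqP ->]; [rewrite Hwk; by left | by right].
    move=> j _.
    have := Nc _ (ltn_ord j); rewrite /= negb_or => /andP[H1 H2].
    by case: (Hk01 _ H1) => // E; rewrite E eqxx in H2.
  have := Tf_two s Hik; rewrite Hs.
  case: Hsi => ->; case: Hsk => ->; done.
have Hw := HT w.
case: (pickP (fun c => phi w c * (phi w c + 1) != 0)) => [c Hc|Hall]; last first.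
  exfalso; move: Hw; rewrite /Tf big1 // => c _.
  by have := Hall c; rewrite /= => /negbFE/eqP.
have Hle := Tf_term_le (phi w) c; rewrite Hw in Hle.
have Hc1 : phi w c = 1.
  have := Hno c; move: Hc Hle; rewrite /=.
  set a := phi w c => Hc Hle Hna.
  have H1 : -2 <= a <= 1 by nia.
  have : a = -2 \/ a = -1 \/ a = 0 \/ a = 1 by lia.
  case=> [E|[E|[E|E]]]; rewrite E in Hc Hna; by [].
have Hc2 : phi w c * (phi w c + 1) = 2 by rewrite Hc1.
exists c, [set c' | phi w c' == -1]; split.
  by rewrite inE Hc1.
apply/ffunP => c'; rewrite !ffunE sum_basis_in inE.
case: (eqVneq c' c) => [->|Hne].
  by rewrite Hc1 /=.
have [E|E] := shape_other2 Hw Hc2 Hne; rewrite E /=; by [].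
Qed.
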